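(* Let $S>0$, $\lambda>0$, $N>0$ and $\mathcal K\in\mathbb{N}^*$. For every $(N,\mathcal K)$-execution strategy $(n_1,\dots,n_{\mathcal K})$, $$S+\lambda SN\le S_{N,\mathcal K}(n_1,\dots,n_{\mathcal K})\le Se^{\lambda N}$$ and $$S+\tfrac12\lambda S\Big(N-\max_{1\le k\le\mathcal K}n_k\Big)\le\overline S_{N,\mathcal K}(n_1,\dots,n_{\mathcal K})\le S\,\frac{e^{\lambda N}-1}{\lambda N}.$$ Moreover, for fixed $N$ and $\mathcal K$, the maximum of $S_{N,\mathcal K}$ (equivalently of the market impact $I_{N,\mathcal K}=S_{N,\mathcal K}-S$) and the maximum of $\overline S_{N,\mathcal K}$ over all $(N,\mathcal K)$-execution strategies are attained if and only if the strategy is equally sized, $n_1=\dots=n_{\mathcal K}=N/\mathcal K$.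
   Context: Fix $S>0$ and $\lambda>0$. For $N>0$ and $\mathcal K\in\mathbb{N}^*$, an $(N,\mathcal K)$-execution strategy is a tuple $(n_1,\dots,n_{\mathcal K})\in(0,\infty)^{\mathcal K}$ with $\sum_{k=1}^{\mathcal K}n_k=N$. For $k\in\{0,\dots,\mathcal K\}$ its $k$-th price is $S_{N,k}(n_1,\dots,n_{\mathcal K}):=S\Big(1+\sum_{i=1}^{k}\lambda^i\sum_{1\le j_1<\dots<j_i\le k}n_{j_1}\cdots n_{j_i}\Big)=S\prod_{j=1}^k(1+\lambda n_j)$, and its average execution price is $\overline S_{N,\mathcal K}(n_1,\dots,n_{\mathcal K}):=\frac1N\sum_{k=1}^{\mathcal K}n_kS_{N,k-1}(n_1,\dots,n_{\mathcal K})$. *)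

(* Defs.v *)
From Stdlib Require Import Reals Lra Lia.
Open Scope R_scope.

Fixpoint psum (f : nat -> R) (k : nat) : R :=
  match k with O => 0 | S k' => psum f k' + f k end.
Fixpoint pprod (f : nat -> R) (k : nat) : R :=
  match k with O => 1 | S k' => pprod f k' * f k end.
Fixpoint pmax (f : nat -> R) (k : nat) : R :=
  match k with O => 0 | S k' => Rmax (pmax f k') (f k) end.

Definition is_strategy (N : R) (K : nat) (n : nat -> R) : Prop :=
  (forall k, (1 <= k <= K)%nat -> 0 < n k) /\ psum n K = N.

Definition price (S0 lam : R) (n : nat -> R) (k : nat) : R :=
  S0 * pprod (fun j => 1 + lam * n j) k.

Definition avg_price (S0 lam N : R) (K : nat) (n : nat -> R) : R :=
  / N * psum (fun k => n k * price S0 lam n (k - 1)) K.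

(* Main.v *)
Require Import Defs.
From Stdlib Require Import Reals Lra Lia.
Open Scope R_scope.

Lemma restr (P : nat -> Prop) K : (forall k, (1 <= k <= S K)%nat -> P k) -> forall k, (1 <= k <= K)%nat -> P k.
Proof. intros H k Hk; apply H; lia. Qed.

Lemma psum_nonneg n K : (forall k, (1 <= k <= K)%nat -> 0 < n k) -> 0 <= psum n K.
Proof.
  induction K; intros H; cbn [psum pprod pmax]; [simpl; lra|].
  pose proof (IHK (restr _ _ H)). pose proof (H (S K) ltac:(lia)). lra.
Qed.

Lemma psum_pos n K : (1 <= K)%nat -> (forall k, (1 <= k <= K)%nat -> 0 < n k) -> 0 < psum n K.
Proof.
  destruct K; intros HK H; [lia|]. simpl.
  pose proof (psum_nonneg n K (restr _ _ H)). pose proof (H (S K) ltac:(lia)). lra.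
Qed.

Lemma pprod_pos n K : (forall k, (1 <= k <= K)%nat -> 0 < n k) -> 0 < pprod n K.
Proof.
  induction K; intros H; cbn [psum pprod pmax]; [simpl; lra|].
  pose proof (IHK (restr _ _ H)). pose proof (H (S K) ltac:(lia)). nra.
Qed.

Lemma pprod_ext f g K : (forall k, (1 <= k <= K)%nat -> f k = g k) -> pprod f K = pprod g K.
Proof.
  induction K; intros H; cbn [psum pprod pmax]; [simpl; lra|].
  rewrite (IHK (restr _ _ H)), (H (S K) ltac:(lia)). reflexivity.
Qed.

Lemma pprod_const c K : pprod (fun _ => c) K = c ^ K.
Proof. induction K; cbn [psum pprod pmax]; [simpl; lra|]. rewrite IHK; simpl; ring. Qed.

Lemma psum_const c K : psum (fun _ => c) K = INR K * c.
Proof. induction K; cbn [psum pprod pmax]; [simpl; lra|]. rewrite IHK, S_INR; ring. Qed.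

Lemma psum_affine lam n K : psum (fun j => 1 + lam * n j) K = INR K + lam * psum n K.
Proof. induction K; cbn [psum pprod pmax]; [simpl; lra|]. rewrite IHK, S_INR; ring. Qed.

Lemma price_lb lam n K : 0 < lam -> (forall k, (1 <= k <= K)%nat -> 0 < n k) ->
  1 + lam * psum n K <= pprod (fun j => 1 + lam * n j) K.
Proof.
  intros hl. induction K; intros H; cbn [psum pprod pmax]; [simpl; lra|].
  pose proof (IHK (restr _ _ H)). pose proof (H (S K) ltac:(lia)).
  pose proof (psum_nonneg n K (restr _ _ H)).
  assert (0 <= lam * psum n K * (lam * n (S K))) by (apply Rmult_le_pos; nra).
  assert (0 <= (pprod (fun j => 1 + lam * n j) K - (1 + lam * psum n K)) * (1 + lam * n (S K))) by (apply Rmult_le_pos; nra).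
  nra.
Qed.

Lemma price_ub lam n K : 0 < lam -> (forall k, (1 <= k <= K)%nat -> 0 < n k) ->
  pprod (fun j => 1 + lam * n j) K <= exp (lam * psum n K).
Proof.
  intros hl. induction K; intros H; cbn [psum pprod pmax]; [rewrite Rmult_0_r, exp_0; lra|].
  pose proof (IHK (restr _ _ H)). pose proof (H (S K) ltac:(lia)).
  pose proof (pprod_pos (fun j => 1 + lam * n j) K ltac:(intros k hk; pose proof (H k ltac:(lia)); nra)).
  replace (lam * (psum n K + n (S K))) with (lam*psum n K + lam * n (S K)) by ring; rewrite exp_plus.
  pose proof (exp_ineq1_le (lam * n (S K))).
  apply Rmult_le_compat; nra.
Qed.

Lemma second_order lam n K : 0 < lam -> (forall k, (1 <= k <= K)%nat -> 0 < n k) ->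
  0 <= psum (fun k => n k * psum n (k - 1)) K /\
  1 + lam * psum n K + lam ^ 2 * psum (fun k => n k * psum n (k - 1)) K
   <= pprod (fun j => 1 + lam * n j) K.
Proof.
  intros hl. induction K; intros H; cbn [psum pprod pmax]; [simpl; lra|].
  destruct (IHK (restr _ _ H)) as [He Hp]. pose proof (H (S K) ltac:(lia)).
  pose proof (psum_nonneg n K (restr _ _ H)).
  replace (S K - 1)%nat with K by lia. simpl in Hp.
  split; [nra|].
  set (e := psum (fun k => n k * psum n (k - 1)) K) in *.
  set (P := pprod (fun j => 1 + lam * n j) K) in *.
  set (s := psum n K) in *. set (m := n (S K)) in *.
  assert (0 <= lam*lam*lam * e * m).
  { apply Rmult_le_pos; [apply Rmult_le_pos|]; try lra. nra. }
  assert (0 <= (P - (1 + lam * s + lam * (lam * 1) * e)) * (1 + lam * m)) by (apply Rmult_le_pos; nra).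
  simpl. nra.
Qed.

Lemma e2_id n K : 2 * psum (fun k => n k * psum n (k - 1)) K = psum n K ^ 2 - psum (fun k => n k * n k) K.
Proof.
  induction K; cbn [psum pprod pmax]; [simpl; lra|]. replace (S K - 1)%nat with K by lia.
  simpl in IHK. nra.
Qed.

Lemma q_le n K : (forall k, (1 <= k <= K)%nat -> 0 < n k) ->
  psum (fun k => n k * n k) K <= pmax n K * psum n K /\ 0 <= pmax n K.
Proof.
  induction K; intros H; cbn [psum pprod pmax]; [simpl; lra|].
  destruct (IHK (restr _ _ H)) as [Hq Hm]. pose proof (H (S K) ltac:(lia)).
  pose proof (psum_nonneg n K (restr _ _ H)).
  pose proof (Rmax_l (pmax n K) (n (S K))). pose proof (Rmax_r (pmax n K) (n (S K))).
  split; [|lra]. nra.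
Qed.

Lemma telesc S0 lam n K :
  lam * psum (fun k => n k * price S0 lam n (k - 1)) K = price S0 lam n K - S0.
Proof.
  induction K; unfold price in *; cbn [psum pprod pmax]; [ring|]. replace (S K - 1)%nat with K by lia.
  simpl in IHK. rewrite Rmult_plus_distr_l, IHK. ring.
Qed.

Lemma avg_eq S0 lam N K n : lam <> 0 -> N <> 0 ->
  avg_price S0 lam N K n = (price S0 lam n K - S0) / (lam * N).
Proof.
  intros hl hN. unfold avg_price. rewrite <- telesc. field. auto.
Qed.

Lemma bern n h : -1 < h -> 1 + INR n * h <= (1 + h) ^ n.
Proof.
  intros Hh. induction n; [simpl; lra|].
  rewrite S_INR. change ((1 + h) ^ S n) with ((1 + h) * (1 + h) ^ n).
  assert (0 <= INR n) by apply pos_INR.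
  assert (0 <= INR n * (h*h)) by (apply Rmult_le_pos; nra).
  assert (0 <= (1+h) * ((1 + h) ^ n - (1 + INR n * h))) by (apply Rmult_le_pos; lra).
  nra.
Qed.

Lemma bern_strict n h : -1 < h -> h <> 0 -> 1 + INR (S (S n)) * h < (1 + h) ^ (S (S n)).
Proof.
  intros Hh Hz. induction n.
  - simpl. assert (0 < h * h) by (apply Rsqr_pos_lt; auto). lra.
  - rewrite (S_INR (S (S n))). change ((1 + h) ^ S (S (S n))) with ((1 + h) * (1 + h) ^ S (S n)).
    assert (0 <= INR (S (S n))) by apply pos_INR.
    assert (0 <= INR (S (S n)) * (h*h)) by (apply Rmult_le_pos; nra).
    assert (0 < (1+h) * ((1 + h) ^ S (S n) - (1 + INR (S (S n)) * h))) by (apply Rmult_lt_0_compat; lra).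
    nra.
Qed.

Lemma step n y x : (1 <= n)%nat -> 0 < y -> 0 < x ->
  y ^ n * x <= ((INR n * y + x) / (INR n + 1)) ^ S n /\
  (x <> y -> y ^ n * x < ((INR n * y + x) / (INR n + 1)) ^ S n).
Proof.
  intros Hn Hy Hx.
  assert (HI : 0 < INR n) by (apply lt_0_INR; lia).
  set (h := (x - y) / ((INR n + 1) * y)).
  assert (E1 : (INR n * y + x) / (INR n + 1) = y * (1 + h)) by (unfold h; field; lra).
  assert (E2 : y ^ n * x = y ^ S n * (1 + INR (S n) * h)).
  { unfold h. rewrite S_INR. simpl. field. lra. }
  assert (Hh : -1 < h).
  { unfold h. apply Rlt_le_trans with (-(y) / ((INR n + 1) * y)).
    - replace (-y / ((INR n + 1) * y)) with (- / (INR n + 1)) by (field; lra).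
      assert (/ (INR n + 1) < / 1) by (apply Rinv_lt_contravar; lra). rewrite Rinv_1 in *. lra.
    - unfold Rdiv. apply Rmult_le_compat_r. left; apply Rinv_0_lt_compat; nra. lra. }
  assert (Hp : 0 < y ^ S n) by (apply pow_lt; lra).
  rewrite E1, E2, Rpow_mult_distr. split.
  - apply Rmult_le_compat_l; [lra|]. apply bern; lra.
  - intros Hxy. apply Rmult_lt_compat_l; [lra|].
    destruct n; [lia|]. apply bern_strict; [lra|].
    unfold h. intros Hc. apply Hxy.
    assert (x - y = 0).
    { apply (f_equal (fun t => t * ((INR (S n) + 1) * y))) in Hc.
      unfold Rdiv in Hc. rewrite Rmult_assoc, Rinv_l in Hc by nra. lra. }
    lra.
Qed.

Lemma amgm x K : (1 <= K)%nat -> (forall k, (1 <= k <= K)%nat -> 0 < x k) ->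
  pprod x K <= (psum x K / INR K) ^ K /\
  (pprod x K = (psum x K / INR K) ^ K -> forall k, (1 <= k <= K)%nat -> x k = psum x K / INR K).
Proof.
  induction K as [|K IH]; intros HK H; [lia|].
  destruct (Nat.eq_dec K 0) as [->|HK0].
  - simpl. split; [lra|]. intros _ k hk. replace k with 1%nat by lia. lra.
  - destruct (IH ltac:(lia) (restr _ _ H)) as [Hle Heq].
    pose proof (psum_pos x K ltac:(lia) (restr _ _ H)) as Hs.
    pose proof (pprod_pos x K (restr _ _ H)) as HP.
    assert (HI : 0 < INR K) by (apply lt_0_INR; lia).
    pose proof (H (S K) ltac:(lia)) as Hx.
    set (y := psum x K / INR K) in *.
    assert (Hy : 0 < y) by (unfold y; apply Rdiv_lt_0_compat; lra).
    destruct (step K y (x (S K)) ltac:(lia) Hy Hx) as [S1 S2].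
    assert (Em : psum x (S K) / INR (S K) = (INR K * y + x (S K)) / (INR K + 1)).
    { rewrite S_INR. cbn [psum]. unfold y. field. lra. }
    rewrite Em. cbn [pprod].
    assert (L1 : pprod x K * x (S K) <= y ^ K * x (S K)) by (apply Rmult_le_compat_r; lra).
    split; [lra|].
    intros Heq2.
    assert (Ex : x (S K) = y).
    { destruct (Req_dec (x (S K)) y) as [|Hne]; auto. specialize (S2 Hne). lra. }
    assert (EP : pprod x K = y ^ K).
    { assert (pprod x K * x (S K) = y ^ K * x (S K)) by lra.
      apply Rmult_eq_reg_r with (x (S K)); lra. }
    specialize (Heq EP).
    assert (Ey : (INR K * y + x (S K)) / (INR K + 1) = y) by (rewrite Ex; field; lra).
    rewrite Ey. intros k hk.
    destruct (Nat.eq_dec k (S K)) as [->|hne]; auto. apply Heq. lia.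
Qed.

Theorem theorem5p1 (S0 lam N : R) (K : nat)
  (hS : 0 < S0) (hlam : 0 < lam) (hN : 0 < N) (hK : (1 <= K)%nat) :
  (forall n : nat -> R, is_strategy N K n ->
     S0 + lam * S0 * N <= price S0 lam n K
     /\ price S0 lam n K <= S0 * exp (lam * N)
     /\ S0 + / 2 * lam * S0 * (N - pmax n K) <= avg_price S0 lam N K n
     /\ avg_price S0 lam N K n <= S0 * (exp (lam * N) - 1) / (lam * N))
  /\
  (forall n : nat -> R, is_strategy N K n ->
     ((forall m : nat -> R, is_strategy N K m -> price S0 lam m K <= price S0 lam n K)
      <-> (forall k, (1 <= k <= K)%nat -> n k = N / INR K)))
  /\
  (forall n : nat -> R, is_strategy N K n ->
     ((forall m : nat -> R, is_strategy N K m ->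
         avg_price S0 lam N K m <= avg_price S0 lam N K n)
      <-> (forall k, (1 <= k <= K)%nat -> n k = N / INR K))).
Proof.
  assert (HI : 0 < INR K) by (apply lt_0_INR; lia).
  assert (Hav : forall n, avg_price S0 lam N K n = (price S0 lam n K - S0) / (lam * N))
    by (intros; apply avg_eq; lra).
  assert (Hdiv : forall p q, (p - S0) / (lam * N) <= (q - S0) / (lam * N) <-> p <= q).
  { intros p q. assert (0 < lam * N) by nra. split; intros Hpq.
    - apply Rmult_le_reg_r with (/ (lam * N)); [apply Rinv_0_lt_compat; lra|].
      unfold Rdiv in Hpq. nra.
    - unfold Rdiv. apply Rmult_le_compat_r; [left; apply Rinv_0_lt_compat; lra|lra]. }
  set (c := N / INR K).
  set (m0 := fun _ : nat => c).
  assert (Hc : 0 < c) by (unfold c; apply Rdiv_lt_0_compat; lra).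
  assert (Hm0 : is_strategy N K m0).
  { split; [intros; unfold m0; lra|]. unfold m0. rewrite psum_const. unfold c. field. lra. }
  set (mu := 1 + lam * c).
  assert (Hpm0 : price S0 lam m0 K = S0 * mu ^ K).
  { unfold price, m0. rewrite pprod_const. reflexivity. }
  assert (AG : forall n, is_strategy N K n ->
     pprod (fun j => 1 + lam * n j) K <= mu ^ K /\
     (pprod (fun j => 1 + lam * n j) K = mu ^ K -> forall k, (1 <= k <= K)%nat -> n k = c)).
  { intros n [Hpos Hsum].
    assert (Hpos' : forall k, (1 <= k <= K)%nat -> 0 < 1 + lam * n k)
      by (intros k hk; pose proof (Hpos k hk); nra).
    destruct (amgm _ K hK Hpos') as [A1 A2].
    assert (Emu : psum (fun j => 1 + lam * n j) K / INR K = mu).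
    { rewrite psum_affine, Hsum. unfold mu, c. field. lra. }
    rewrite Emu in A1, A2. split; auto.
    intros Heq k hk. specialize (A2 Heq k hk). unfold mu in A2.
    apply Rmult_eq_reg_l with lam; lra. }
  assert (P2 : forall n : nat -> R, is_strategy N K n ->
     ((forall m : nat -> R, is_strategy N K m -> price S0 lam m K <= price S0 lam n K)
      <-> (forall k, (1 <= k <= K)%nat -> n k = N / INR K))).
  { intros n Hn. split.
    - intros Hmax. specialize (Hmax m0 Hm0). rewrite Hpm0 in Hmax.
      destruct (AG n Hn) as [A1 A2]. apply A2. unfold price in Hmax.
      assert (mu ^ K <= pprod (fun j => 1 + lam * n j) K).
      { apply Rmult_le_reg_l with S0; lra. }
      lra.
    - intros Heq m Hm.
      assert (price S0 lam n K = S0 * mu ^ K).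
      { unfold price. rewrite <- pprod_const. f_equal. apply pprod_ext.
        intros k hk. rewrite Heq by auto. reflexivity. }
      rewrite H. unfold price. apply Rmult_le_compat_l; [lra|]. apply (AG m Hm). }
  split; [|split; [exact P2|]].
  - intros n Hn. pose proof Hn as [Hpos Hsum].
    pose proof (price_lb lam n K hlam Hpos) as L1.
    pose proof (price_ub lam n K hlam Hpos) as U1.
    rewrite Hsum in L1, U1. unfold price.
    assert (0 < lam * N) by nra.
    split; [nra|]. split; [nra|].
    rewrite Hav. unfold price. split.
    + destruct (second_order lam n K hlam Hpos) as [He Hp].
      pose proof (e2_id n K) as Ei. destruct (q_le n K Hpos) as [Hq Hm].
      rewrite Hsum in Hp, Ei, Hq.
      set (e := psum (fun k => n k * psum n (k - 1)) K) in *.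
      set (P := pprod (fun j => 1 + lam * n j) K) in *.
      apply Rle_trans with (S0 * (lam * N + lam ^ 2 * e) / (lam * N)).
      * replace (S0 * (lam * N + lam ^ 2 * e) / (lam * N)) with (S0 + S0 * lam * e / N) by (field; lra).
        assert (2 * e >= N * N - pmax n K * N) by (simpl in Ei; nra).
        assert (S0 * lam * (N * N - pmax n K * N) / (2 * N) <= S0 * lam * e / N).
        { replace (S0 * lam * e / N) with (S0 * lam * (2 * e) / (2 * N)) by (field; lra).
          unfold Rdiv. apply Rmult_le_compat_r; [left; apply Rinv_0_lt_compat; lra|].
          apply Rmult_le_compat_l; nra. }
        replace (S0 * lam * (N * N - pmax n K * N) / (2 * N)) with (/ 2 * lam * S0 * (N - pmax n K)) in H1 by (field; lra).
        lra.
      * unfold Rdiv. apply Rmult_le_compat_r; [left; apply Rinv_0_lt_compat; lra|]. nra.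
    + replace (S0 * (exp (lam * N) - 1) / (lam * N)) with ((S0 * exp (lam * N) - S0) / (lam * N)) by (field; lra).
      apply (proj2 (Hdiv _ _)). nra.
  - intros n Hn. split.
    + intros Hmax. apply (proj1 (P2 n Hn)). intros m Hm.
      apply (proj1 (Hdiv _ _)). rewrite <- !Hav. auto.
    + intros Heq m Hm. rewrite !Hav. apply (proj2 (Hdiv _ _)). apply (proj2 (P2 n Hn)); auto.
Qed.
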